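(* Let $\mathcal{C}$ be an additive category with an automorphism $\Sigma$, let $n\ge 3$, and let $\mathscr{N}$ be a collection of $n$-$\Sigma$-sequences in $\mathcal{C}$ satisfying the axioms (N1)(b), (N2* ) and (N3). Then every $n$-$\Sigma$-sequence in $\mathscr{N}$ is exact.
   Context: $\mathcal{C}$ is an additive category, $\Sigma\colon\mathcal{C}\to\mathcal{C}$ an automorphism, and $n\ge 3$ an integer. An $n$-$\Sigma$-sequence $A_\bullet$ is a diagram $A_1\xrightarrow{\alpha_1}A_2\xrightarrow{\alpha_2}\cdots\xrightarrow{\alpha_{n-1}}A_n\xrightarrow{\alpha_n}\Sigma A_1$ in $\mathcal{C}$. It is exact if for every object $B$ of $\mathcal{C}$ the doubly infinite sequence of abelian groups $\cdots\to\mathrm{Hom}(B,\Sigma^{i-1}A_n)\xrightarrow{(\Sigma^{i-1}\alpha_n)_*}\mathrm{Hom}(B,\Sigma^iA_1)\xrightarrow{(\Sigma^i\alpha_1)_*}\mathrm{Hom}(B,\Sigma^iA_2)\to\cdots\xrightarrow{(\Sigma^i\alpha_{n-1})_*}\mathrm{Hom}(B,\Sigma^iA_n)\xrightarrow{(\Sigma^i\alpha_n)_*}\mathrm{Hom}(B,\Sigma^{i+1}A_1)\to\cdots$ ($i\in\mathbb{Z}$) is exact. The left rotation of $A_\bullet$ is $A_2\xrightarrow{\alpha_2}A_3\to\cdots\xrightarrow{\alpha_n}\Sigma A_1\xrightarrow{(-1)^n\Sigma\alpha_1}\Sigma A_2$. A morphism $A_\bullet\to B_\bullet$ of $n$-$\Sigma$-sequences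 (with $B_\bullet$ having maps $\beta_i$) is a tuple $(\varphi_1,\dots,\varphi_n)$ of morphisms $\varphi_i\colon A_i\to B_i$ with $\varphi_{i+1}\alpha_i=\beta_i\varphi_i$ for $1\le i\le n-1$ and $\Sigma\varphi_1\circ\alpha_n=\beta_n\circ\varphi_n$. Axioms for a collection $\mathscr{N}$ of $n$-$\Sigma$-sequences: (N1)(b): for every object $A$, the trivial sequence $A\xrightarrow{1}A\to0\to\cdots\to0\to\Sigma A$ belongs to $\mathscr{N}$. (N2* ): the left rotation of every sequence in $\mathscr{N}$ belongs to $\mathscr{N}$. (N3): given $A_\bullet,B_\bullet\in\mathscr{N}$ and morphisms $\varphi_1\colon A_1\to B_1$, $\varphi_2\colon A_2\to B_2$ with $\varphi_2\alpha_1=\beta_1\varphi_1$, there exist $\varphi_3,\dots,\varphi_n$ such that $(\varphi_1,\dots,\varphi_n)$ is a morphism of $n$-$\Sigma$-sequences. *)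

(* Defs.v *)
From HB Require Import structures.
From mathcomp Require Import all_boot all_algebra.
Set Implicit Arguments.
Unset Strict Implicit.
Unset Printing Implicit Defensive.
Import GRing.Theory.
Local Open Scope ring_scope.

Record addcat := AddCat {
  obj : Type;
  mor : obj -> obj -> zmodType;
  cmp : forall X Y Z : obj, mor Y Z -> mor X Y -> mor X Z;
  idm : forall X : obj, mor X X;
  cmpA : forall (X Y Z W : obj) (h : mor Z W) (g : mor Y Z) (f : mor X Y),
      cmp h (cmp g f) = cmp (cmp h g) f;
  comp1m : forall (X Y : obj) (f : mor X Y), cmp (idm Y) f = f;
  compm1 : forall (X Y : obj) (f : mor X Y), cmp f (idm X) = f;
  compDl : forall (X Y Z : obj) (g1 g2 : mor Y Z) (f : mor X Y),
      cmp (g1 + g2) f = cmp g1 f + cmp g2 f;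
  compDr : forall (X Y Z : obj) (g : mor Y Z) (f1 f2 : mor X Y),
      cmp g (f1 + f2) = cmp g f1 + cmp g f2;
  zobj : obj;
  zobj_init : forall (X : obj) (f : mor zobj X), f = 0;
  zobj_term : forall (X : obj) (f : mor X zobj), f = 0;
  biprod : forall X Y : obj, exists (P : obj) (i1 : mor X P) (i2 : mor Y P)
      (p1 : mor P X) (p2 : mor P Y),
      [/\ cmp p1 i1 = idm X, cmp p2 i2 = idm Y, cmp p2 i1 = 0,
          cmp p1 i2 = 0 & cmp i1 p1 + cmp i2 p2 = idm P]
}.
Arguments cmp {a X Y Z}.
Arguments idm {a}.
Arguments zobj {a}.

Definition tr (C : addcat) (X X' Y Y' : obj C) (e1 : X = X') (e2 : Y = Y')
  (f : mor X Y) : mor X' Y' :=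
  match e1 in _ = X1, e2 in _ = Y1 return mor X1 Y1 with
  | erefl, erefl => f end.

Record autom (C : addcat) := Autom {
  So : obj C -> obj C;
  Sm : forall X Y : obj C, mor X Y -> mor (So X) (So Y);
  Sm_id : forall X, Sm (idm X) = idm (So X);
  Sm_comp : forall X Y Z (g : mor Y Z) (f : mor X Y),
      Sm (cmp g f) = cmp (Sm g) (Sm f);
  Sm_add : forall X Y (f g : mor X Y), Sm (f + g) = Sm f + Sm g;
  Io : obj C -> obj C;
  Im : forall X Y : obj C, mor X Y -> mor (Io X) (Io Y);
  Im_id : forall X, Im (idm X) = idm (Io X);
  Im_comp : forall X Y Z (g : mor Y Z) (f : mor X Y),
      Im (cmp g f) = cmp (Im g) (Im f);
  Im_add : forall X Y (f g : mor X Y), Im (f + g) = Im f + Im g;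
  SIo : forall X, So (Io X) = X;
  ISo : forall X, Io (So X) = X;
  SIm : forall X Y (f : mor X Y), tr (SIo X) (SIo Y) (Sm (Im f)) = f;
  ISm : forall X Y (f : mor X Y), tr (ISo X) (ISo Y) (Im (Sm f)) = f
}.
Arguments So {C}.
Arguments Sm {C} a {X Y}.
Arguments Io {C}.
Arguments Im {C} a {X Y}.

Fixpoint itero (C : addcat) (fo : obj C -> obj C) (k : nat) (X : obj C) : obj C :=
  match k with 0 => X | k'.+1 => fo (itero fo k' X) end.
Fixpoint iterm (C : addcat) (fo : obj C -> obj C)
  (fm : forall X Y : obj C, mor X Y -> mor (fo X) (fo Y)) (k : nat)
  (X Y : obj C) (f : mor X Y) : mor (itero fo k X) (itero fo k Y) :=
  match k with 0 => f | k'.+1 => fm _ _ (iterm fm k' f) end.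

(* Sigma^i for i : int  (Negz k = -(k+1)) *)
Definition powo (C : addcat) (S : autom C) (i : int) (X : obj C) : obj C :=
  match i with
  | Posz k => itero (So S) k X
  | Negz k => itero (Io S) k.+1 X end.
Definition powm (C : addcat) (S : autom C) (i : int) (X Y : obj C) (f : mor X Y)
  : mor (powo S i X) (powo S i Y) :=
  match i with
  | Posz k => iterm (fun X Y => @Sm C S X Y) k f
  | Negz k => iterm (fun X Y => @Im C S X Y) k.+1 f end.

(* chain Z X m : a string of m composable morphisms from X to Z *)
Inductive chain (C : addcat) (Z : obj C) : obj C -> nat -> Type :=
| cnil : chain Z Z 0
| ccons (X Y : obj C) (m : nat) : mor X Y -> chain Z Y m -> chain Z X m.+1.
Arguments cnil {C Z}.
Arguments ccons {C Z X Y m}.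

Fixpoint snoc (C : addcat) (Z X : obj C) (m : nat) (p : chain Z X m)
  (W : obj C) (g : mor Z W) : chain W X m.+1 :=
  match p in chain _ X' m' return chain W X' m'.+1 with
  | cnil => ccons g cnil
  | ccons _ _ _ f p' => ccons f (snoc p' g)
  end.

Definition chain_dec (C : addcat) (Z X : obj C) (m : nat) (c : chain Z X m.+1)
  : {Y : obj C & (mor X Y * chain Z Y m)%type} :=
  match c in chain _ X' k
    return (match k with 0 => unit
            | k'.+1 => {Y : obj C & (mor X' Y * chain Z Y k')%type} end) with
  | cnil => tt
  | ccons _ Y _ f p => existT _ Y (f, p)
  end.

Fixpoint zchain (C : addcat) (m : nat) : chain (@zobj C) (@zobj C) m :=
  match m with 0 => cnil | m'.+1 => ccons 0 (zchain C m') end.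

(* commutative ladders between two chains of the same length:
   ladder p q phi chi  with phi the vertical map at the start, chi at the end *)
Inductive ladder (C : addcat) : forall (Z Z' X X' : obj C) (m : nat),
    chain Z X m -> chain Z' X' m -> mor X X' -> mor Z Z' -> Prop :=
| lad_nil (Z Z' : obj C) (phi : mor Z Z') : ladder cnil cnil phi phi
| lad_cons (Z Z' X X' Y Y' : obj C) (m : nat) (f : mor X Y) (g : mor X' Y')
    (p : chain Z Y m) (q : chain Z' Y' m) (phi : mor X X') (psi : mor Y Y')
    (chi : mor Z Z') :
    cmp psi f = cmp g phi -> ladder p q psi chi ->
    ladder (ccons f p) (ccons g q) phi chi.

Inductive cpairs (C : addcat)
    (P : forall X Y W : obj C, mor X Y -> mor Y W -> Prop)
    : forall (Z X : obj C) (m : nat), chain Z X m -> Prop :=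
| cp0 (Z : obj C) : cpairs P (@cnil C Z)
| cp1 (Z X : obj C) (f : mor X Z) : cpairs P (ccons f cnil)
| cp2 (Z X Y W : obj C) (m : nat) (f : mor X Y) (g : mor Y W) (p : chain Z W m) :
    P X Y W f g -> cpairs P (ccons g p) -> cpairs P (ccons f (ccons g p)).

(* ---------- n-Sigma-sequences, with n = l + 2 ---------- *)
(* A1 --a1--> A2 --rest (l maps)--> An --an--> Sigma A1 *)
Record sseq (C : addcat) (S : autom C) (l : nat) := SSeq {
  s1 : obj C; s2 : obj C; sn : obj C;
  sa1 : mor s1 s2;
  srest : chain sn s2 l;
  san : mor sn (So S s1)
}.
Arguments s1 {C S l}. Arguments s2 {C S l}. Arguments sn {C S l}.
Arguments sa1 {C S l}. Arguments srest {C S l}. Arguments san {C S l}.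

(* exactness of Hom(B,-) applied to X --f--> Y --g--> W, at Hom(B,Y) *)
Definition exact_at (C : addcat) (B X Y W : obj C) (f : mor X Y) (g : mor Y W)
  : Prop :=
  (forall h : mor B X, cmp g (cmp f h) = 0) /\
  (forall h : mor B Y, cmp g h = 0 -> exists k : mor B X, h = cmp f k).

Definition ext_chain (C : addcat) (S : autom C) (l : nat) (s : sseq S l)
  : chain (So S (s2 s)) (s1 s) (l.+3) :=
  ccons (sa1 s) (snoc (snoc (srest s) (san s)) (Sm S (sa1 s))).

(* exactness of the doubly infinite Hom(B, Sigma^i -) sequence: exactness at
   every term; Hom(B,Sigma^{i+1} A1) is written Hom(B,Sigma^i (Sigma A1)) *)
Definition exact_sseq (C : addcat) (S : autom C) (l : nat) (s : sseq S l)
  : Prop :=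
  forall (i : int) (B : obj C),
    cpairs (fun X Y W (f : mor X Y) (g : mor Y W) =>
              exact_at B (powm S i f) (powm S i g)) (ext_chain s).

(* left rotation, for n = l + 3 *)
Definition rotate (C : addcat) (S : autom C) (l : nat) (s : sseq S l.+1)
  : sseq S l.+1 :=
  let d := chain_dec (srest s) in
  @SSeq C S l.+1 (s2 s) (projT1 d) (So S (s1 s)) (projT2 d).1
        (snoc (projT2 d).2 (san s))
        (Sm S (sa1 s) *~ ((-1) ^+ (l.+3) : int)).

Definition trivseq (C : addcat) (S : autom C) (l : nat) (A : obj C)
  : sseq S l.+1 :=
  @SSeq C S l.+1 A A zobj (idm A) (ccons 0 (zchain C l)) 0.

Definition extends_to_morphism (C : addcat) (S : autom C) (l : nat)
  (a b : sseq S l) (phi1 : mor (s1 a) (s1 b)) (phi2 : mor (s2 a) (s2 b)) : Prop :=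
  exists phin : mor (sn a) (sn b),
    ladder (srest a) (srest b) phi2 phin /\
    cmp (Sm S phi1) (san a) = cmp (san b) phin.
Arguments extends_to_morphism {C S l} a b phi1 phi2.
Arguments exact_sseq {C S l} s.
Arguments rotate {C S l} s.
Arguments trivseq {C} S l A.

(* Main.v *)
Require Import Defs.
From mathcomp Require Import all_boot all_algebra.
From Stdlib Require Import ProofIrrelevance.
Set Implicit Arguments.
Unset Strict Implicit.
Unset Printing Implicit Defensive.
Import GRing.Theory.
Local Open Scope ring_scope.
From Stdlib Require Import ProofIrrelevance.

Lemma cmp0l (C : addcat) (X Y Z : obj C) (f : mor X Y) : cmp (0 : mor Y Z) f = 0.
Proof.
have e := compDl (0 : mor Y Z) 0 f; rewrite addr0 in e.
by move/(congr1 (fun z => z - cmp (0 : mor Y Z) f)): e; rewrite subrr addrK.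
Qed.

Lemma cmp0r (C : addcat) (X Y Z : obj C) (g : mor Y Z) : cmp g (0 : mor X Y) = 0.
Proof.
have e := compDr g (0 : mor X Y) 0; rewrite addr0 in e.
by move/(congr1 (fun z => z - cmp g (0 : mor X Y))): e; rewrite subrr addrK.
Qed.

Lemma cmpNl (C : addcat) (X Y Z : obj C) (g : mor Y Z) (f : mor X Y) :
  cmp (- g) f = - cmp g f.
Proof.
apply/eqP; rewrite -addr_eq0 -compDl addNr; exact/eqP/cmp0l.
Qed.

Lemma cmpNr (C : addcat) (X Y Z : obj C) (g : mor Y Z) (f : mor X Y) :
  cmp g (- f) = - cmp g f.
Proof.
apply/eqP; rewrite -addr_eq0 -compDr addNr; exact/eqP/cmp0r.
Qed.

Lemma add0F (M N : zmodType) (F : M -> N) : (forall a b, F (a + b) = F a + F b) -> F 0 = 0.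
Proof.
move=> h; have e := h 0 0; rewrite addr0 in e.
by move/(congr1 (fun z => z - F 0)): e; rewrite subrr addrK.
Qed.

Lemma addNF (M N : zmodType) (F : M -> N) : (forall a b, F (a + b) = F a + F b) ->
  forall a, F (- a) = - F a.
Proof.
move=> h a; apply/eqP; rewrite -addr_eq0 -h addNr.
have e := h 0 0; rewrite addr0 in e.
by move/(congr1 (fun z => z - F 0)): e; rewrite subrr addrK => <-.
Qed.

Lemma tr_cmp (C : addcat) (X X' Y Y' Z Z' : obj C) (e1 : X = X') (e2 : Y = Y')
  (e3 : Z = Z') (g : mor Y Z) (f : mor X Y) :
  tr e1 e3 (cmp g f) = cmp (tr e2 e3 g) (tr e1 e2 f).
Proof. by destruct e1, e2, e3. Qed.

Lemma tr_eq0 (C : addcat) (X X' Y Y' : obj C) (e1 : X = X') (e2 : Y = Y') (f : mor X Y) :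
  tr e1 e2 f = 0 -> f = 0.
Proof. by destruct e1, e2. Qed.

Lemma tr0 (C : addcat) (X X' Y Y' : obj C) (e1 : X = X') (e2 : Y = Y') :
  tr e1 e2 (0 : mor X Y) = 0.
Proof. by destruct e1, e2. Qed.

Lemma Fm_tr (C : addcat) (Fo : obj C -> obj C)
  (Fm : forall X Y : obj C, mor X Y -> mor (Fo X) (Fo Y))
  (X X' Y Y' : obj C) (e1 : X = X') (e2 : Y = Y') (f : mor X Y) :
  Fm _ _ (tr e1 e2 f) = tr (f_equal Fo e1) (f_equal Fo e2) (Fm _ _ f).
Proof. by destruct e1, e2. Qed.

Definition goodF (C : addcat) (Fo : obj C -> obj C)
  (Fm : forall X Y : obj C, mor X Y -> mor (Fo X) (Fo Y)) : Prop :=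
  [/\ forall X Y Z (g : mor Y Z) (f : mor X Y), Fm _ _ (cmp g f) = cmp (Fm _ _ g) (Fm _ _ f),
      forall X Y, Fm X Y 0 = 0 &
      forall B, exists B' (u : mor B (Fo B')),
        (forall Y (h : mor B (Fo Y)), exists h', h = cmp (Fm _ _ h') u) /\
        (forall Y (h' : mor B' Y), cmp (Fm _ _ h') u = 0 -> h' = 0)].

Lemma goodF_id (C : addcat) : @goodF C (fun X : obj C => X) (fun X Y f => f).
Proof.
split=> // B; exists B, (idm B); split.
  by move=> Y h; exists h; rewrite compm1.
by move=> Y h; rewrite compm1.
Qed.

Lemma goodF_comp (C : addcat) (Fo Go : obj C -> obj C)
  (Fm : forall X Y : obj C, mor X Y -> mor (Fo X) (Fo Y))
  (Gm : forall X Y : obj C, mor X Y -> mor (Go X) (Go Y)) :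
  goodF Fm -> goodF Gm -> goodF (fun X Y f => Fm _ _ (Gm X Y f)).
Proof.
case=> Fc F0 FE [Gc G0 GE]; split.
- by move=> X Y Z g f; rewrite Gc Fc.
- by move=> X Y; rewrite G0 F0.
move=> B; have [B1 [u [uS uF]]] := FE B; have [B2 [v [vS vF]]] := GE B1.
exists B2, (cmp (Fm _ _ v) u); split.
  move=> Y h; have [h1 ->] := uS _ h; have [h2 ->] := vS _ h1.
  by exists h2; rewrite Fc cmpA.
move=> Y h' H; apply: vF; apply: uF; by rewrite Fc -cmpA.
Qed.

Lemma goodF_iter (C : addcat) (Fo : obj C -> obj C)
  (Fm : forall X Y : obj C, mor X Y -> mor (Fo X) (Fo Y)) :
  goodF Fm -> forall k, goodF (iterm Fm k).
Proof.
move=> gF; elim=> [|k IH]; first exact: goodF_id.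
exact: (goodF_comp gF IH).
Qed.

Lemma goodF_inv (C : addcat) (Fo Go : obj C -> obj C)
  (Fm : forall X Y : obj C, mor X Y -> mor (Fo X) (Fo Y))
  (Gm : forall X Y : obj C, mor X Y -> mor (Go X) (Go Y))
  (Fc : forall X Y Z (g : mor Y Z) (f : mor X Y), Fm _ _ (cmp g f) = cmp (Fm _ _ g) (Fm _ _ f))
  (Fa : forall X Y (f g : mor X Y), Fm _ _ (f + g) = Fm _ _ f + Fm _ _ g)
  (Ga : forall X Y (f g : mor X Y), Gm _ _ (f + g) = Gm _ _ f + Gm _ _ g)
  (FG : forall X, Fo (Go X) = X) (GF : forall X, Go (Fo X) = X)
  (FGm : forall X Y (f : mor X Y), tr (FG X) (FG Y) (Fm _ _ (Gm _ _ f)) = f)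
  (GFm : forall X Y (f : mor X Y), tr (GF X) (GF Y) (Gm _ _ (Fm _ _ f)) = f) :
  goodF Fm.
Proof.
have F0 : forall X Y, Fm X Y 0 = 0 by move=> X Y; apply: add0F; apply: Fa.
have G0 : forall X Y, Gm X Y 0 = 0 by move=> X Y; apply: add0F; apply: Ga.
split=> // B.
exists (Go B), (tr (FG B) (erefl (Fo (Go B))) (idm _)); split.
  move=> Y h; exists (tr (erefl (Go B)) (GF Y) (Gm _ _ h)).
  rewrite Fm_tr -(tr_cmp _ (erefl (Fo (Go B)))) compm1 /=.
  by rewrite (proof_irrelevance _ (f_equal Fo (GF Y)) (FG (Fo Y))) FGm.
move=> Y h' H.
have H2 : tr (FG B) (erefl (Fo Y)) (Fm _ _ h') = 0 by rewrite -(compm1 (Fm _ _ h')) (tr_cmp _ (erefl (Fo (Go B)))).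
move: H2 => /tr_eq0 H2.
by rewrite -(GFm _ _ h') H2 G0 tr0.
Qed.

Lemma goodF_powm (C : addcat) (S : autom C) (i : int) : goodF (powm S i).
Proof.
have gS : goodF (fun X Y (f : mor X Y) => Sm S f).
  apply: (@goodF_inv C (So S) (Io S) _ (fun X Y (f : mor X Y) => Im S f)
    (Sm_comp S) (Sm_add S) (Im_add S) (SIo S) (ISo S) (SIm S) (ISm S)).
have gI : goodF (fun X Y (f : mor X Y) => Im S f).
  apply: (@goodF_inv C (Io S) (So S) _ (fun X Y (f : mor X Y) => Sm S f)
    (Im_comp S) (Im_add S) (Sm_add S) (ISo S) (SIo S) (ISm S) (SIm S)).
case: i => k; [exact: goodF_iter gS k | exact: goodF_iter gI k.+1].
Qed.

Lemma exact_transfer (C : addcat) (Fo : obj C -> obj C)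
  (Fm : forall X Y : obj C, mor X Y -> mor (Fo X) (Fo Y)) (X Y W : obj C)
  (f : mor X Y) (g : mor Y W) :
  goodF Fm -> (forall B', exact_at B' f g) -> forall B, exact_at B (Fm _ _ f) (Fm _ _ g).
Proof.
case=> Fc F0 FE Hex B; split.
  move=> h; rewrite cmpA -Fc.
  have [Z0 _] := Hex X.
  have -> : cmp g f = 0 by rewrite -(compm1 (cmp g f)) -cmpA; apply: Z0.
  by rewrite F0 cmp0l.
have [B' [u [uS uF]]] := FE B.
move=> h; have [h' ->] := uS _ h => H.
rewrite cmpA -Fc in H; have /uF H2 := H.
have [_ K] := Hex B'; have [k ->] := K _ H2.
by exists (cmp (Fm _ _ k) u); rewrite Fc cmpA.
Qed.

Lemma sgE (M : zmodType) (x : M) k :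
  (x *~ ((-1) ^+ k.+1 : int)) = - (x *~ ((-1) ^+ k : int)).
Proof. by rewrite exprS mulN1r mulrNz. Qed.

Lemma cmp_sgr (C : addcat) (X Y Z : obj C) (g : mor Y Z) (f : mor X Y) k :
  cmp g (f *~ ((-1) ^+ k : int)) = cmp g f *~ ((-1) ^+ k : int).
Proof.
elim: k => [|k IH]; first by rewrite expr0 !mulr1z.
by rewrite !sgE cmpNr IH.
Qed.

Lemma cmp_sgl (C : addcat) (X Y Z : obj C) (g : mor Y Z) (f : mor X Y) k :
  cmp (g *~ ((-1) ^+ k : int)) f = cmp g f *~ ((-1) ^+ k : int).
Proof.
elim: k => [|k IH]; first by rewrite expr0 !mulr1z.
by rewrite !sgE cmpNl IH.
Qed.

Lemma sg_inj (M : zmodType) (x y : M) k :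
  x *~ ((-1) ^+ k : int) = y *~ ((-1) ^+ k : int) -> x = y.
Proof.
elim: k => [|k IH]; first by rewrite expr0 !mulr1z.
by rewrite !sgE => /oppr_inj.
Qed.

Lemma exact_neg (C : addcat) (B X Y W : obj C) (f : mor X Y) (g : mor Y W) :
  exact_at B f (- g) -> exact_at B f g.
Proof.
case=> H1 H2; split.
  by move=> h; apply: oppr_inj; rewrite -cmpNl H1 oppr0.
by move=> h e; apply: H2; rewrite cmpNl e oppr0.
Qed.

Lemma itermN (C : addcat) (Fo : obj C -> obj C)
  (Fm : forall X Y : obj C, mor X Y -> mor (Fo X) (Fo Y))
  (Fa : forall X Y (f g : mor X Y), Fm _ _ (f + g) = Fm _ _ f + Fm _ _ g) k
  (X Y : obj C) (f : mor X Y) : iterm Fm k (- f) = - iterm Fm k f.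
Proof.
elim: k => [|k IH] /=; first by [].
by rewrite IH; apply: (addNF (F := Fm _ _)) => a b; apply: Fa.
Qed.

Lemma powmN (C : addcat) (S : autom C) i (X Y : obj C) (f : mor X Y) :
  powm S i (- f) = - powm S i f.
Proof.
case: i => k; apply: itermN => *; [exact: Sm_add | exact: Im_add].
Qed.

Lemma exact_sg (C : addcat) (S : autom C) i B (X Y W : obj C) (f : mor X Y)
  (g : mor Y W) k :
  exact_at B (powm S i f) (powm S i (g *~ ((-1) ^+ k : int))) ->
  exact_at B (powm S i f) (powm S i g).
Proof.
elim: k => [|k IH]; first by rewrite expr0 mulr1z.
rewrite sgE powmN => /exact_neg; exact: IH.
Qed.

Fixpoint cpw (C : addcat) (P : forall X Y W : obj C, mor X Y -> mor Y W -> Prop)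
  (j : nat) (W X Z : obj C) (m : nat) (c : chain Z X m) {struct c} : mor W X -> Prop :=
  match c in chain _ X' _ return mor W X' -> Prop with
  | cnil => fun _ => True
  | ccons X0 Y0 m0 g p => fun f =>
      match j with 0 => True | j'.+1 => P _ _ _ f g /\ cpw P j' p g end
  end.

Lemma cpw_cpairs (C : addcat) (P : forall X Y W : obj C, mor X Y -> mor Y W -> Prop)
  (Z X : obj C) m (c : chain Z X m) :
  forall j W (f : mor W X), (m <= j)%N -> cpw P j c f -> cpairs P (ccons f c).
Proof.
elim: c => [|X0 Y0 m0 g p IH] j W f Hj /=; first by constructor.
case: j Hj => // j Hj [H1 H2]; constructor => //; exact: IH H2.
Qed.

Lemma cpw_prefix (C : addcat) (P : forall X Y W : obj C, mor X Y -> mor Y W -> Prop)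
  (Z Z' X : obj C) m (c : chain Z X m) (b : mor Z Z') :
  forall j W (f : mor W X), cpw P j (snoc c b) f -> cpw P j c f.
Proof.
elim: c => [|X0 Y0 m0 g p IH] j W f //=.
case: j => // j [H1 H2]; split => //; exact: IH H2.
Qed.

Lemma cpw_change (C : addcat) (P : forall X Y W : obj C, mor X Y -> mor Y W -> Prop)
  (Z Z' X : obj C) m (c : chain Z X m) (b b' : mor Z Z') :
  (forall U (x : mor U Z), P _ _ _ x b -> P _ _ _ x b') ->
  forall j W (f : mor W X), cpw P j (snoc c b) f -> cpw P j (snoc c b') f.
Proof.
move=> Hb; elim: c => [|X0 Y0 m0 g p IH] j W f /=.
  by case: j => // j [H1 H2]; split => //; apply: Hb.
case: j => // j [H1 H2]; split => //; exact: IH H2.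
Qed.

Lemma chain_decE (C : addcat) (Z X : obj C) m (c : chain Z X m.+1) :
  c = ccons (projT2 (chain_dec c)).1 (projT2 (chain_dec c)).2.
Proof.
have : forall k (c : chain Z X k), match k return chain Z X k -> Prop with
  | 0 => fun _ => True
  | k.+1 => fun c => c = ccons (projT2 (chain_dec c)).1 (projT2 (chain_dec c)).2 end c.
  by move=> k c'; case: c'.
by move/(_ m.+1 c).
Qed.

Lemma ladder_head (C : addcat) (Z Z' X X' : obj C) m (p : chain Z X m)
  (q : chain Z' X' m) (phi : mor X X') (chi : mor Z Z') :
  ladder p q phi chi ->
  match m return chain Z X m -> chain Z' X' m -> Prop with
  | 0 => fun _ _ => True
  | k.+1 => fun p q => exists psi : mor (projT1 (chain_dec p)) (projT1 (chain_dec q)),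
      cmp psi (projT2 (chain_dec p)).1 = cmp (projT2 (chain_dec q)).1 phi end p q.
Proof. by case=> //= *; eexists; eassumption. Qed.

Lemma core_exact (C : addcat) (S : autom C) (m : nat)
  (N : sseq S m.+1 -> Prop)
  (N1b : forall A : obj C, N (trivseq S m A))
  (N2s : forall s, N s -> N (rotate s))
  (N3 : forall a b, N a -> N b ->
     forall (phi1 : mor (s1 a) (s1 b)) (phi2 : mor (s2 a) (s2 b)),
       cmp phi2 (sa1 a) = cmp (sa1 b) phi1 ->
       extends_to_morphism a b phi1 phi2) s :
  N s -> forall B, exact_at B (sa1 s) (projT2 (chain_dec (srest s))).1.
Proof.
move=> Ns B; split.
  move=> h; rewrite cmpA.
  have [phin [L _]] := N3 (trivseq S m (s1 s)) s (N1b _) Ns (idm _) (sa1 s) erefl.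
  have /= [psi E] := ladder_head L.
  by rewrite -E cmp0r cmp0l.
move=> h H.
have [phin [_ E]] := N3 (rotate (trivseq S m B)) (rotate s) (N2s _ (N1b B)) (N2s _ Ns)
  h 0 (etrans (cmp0l _ _) (esym H)).
move: E => /=; rewrite cmp_sgr cmp_sgl Sm_id compm1 => /sg_inj E.
exists (tr (ISo S B) (ISo S (s1 s)) (Im S (phin : mor (So S B) (So S (s1 s))))).
rewrite -{1}(ISm S h) E Im_comp (tr_cmp (ISo S B) (ISo S (s1 s))) ISm //=.

Qed.

Local Close Scope ring_scope.

Theorem lemma3p1 (C : addcat) (S : autom C) (m : nat)
  (N : sseq S m.+1 -> Prop)
  (N1b : forall A : obj C, N (trivseq S m A))
  (N2s : forall s, N s -> N (rotate s))
  (N3 : forall a b, N a -> N b ->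
     forall (phi1 : mor (s1 a) (s1 b)) (phi2 : mor (s2 a) (s2 b)),
       cmp phi2 (sa1 a) = cmp (sa1 b) phi1 ->
       extends_to_morphism a b phi1 phi2) :
  forall s, N s -> exact_sseq s.
Proof.
move=> s Ns i B.
pose P := fun (X Y W : obj C) (f : mor X Y) (g : mor Y W) =>
  exact_at B (powm S i f) (powm S i g).
have key : forall j s, N s ->
    cpw P j (snoc (snoc (srest s) (san s)) (Sm S (sa1 s))) (sa1 s).
  elim=> [|j IH] s' Ns'; rewrite (chain_decE (srest s')) //=.
  split.
    apply: (exact_transfer (goodF_powm S i)) => B'.
    exact: (core_exact N1b N2s N3).
  have := IH _ (N2s _ Ns') => /= /cpw_prefix.
  apply: cpw_change => U x.
  exact: exact_sg.
rewrite /ext_chain; apply: (cpw_cpairs (j := m.+3)) => //.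
exact: key.
Qed.
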